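(* Let $\mathcal{A}\subset\mathscr{P}(\mathbb{N}_0)$ be a Furstenberg family and let $f:X\to X$ be a continuous map on a (not necessarily separable nor complete) metric space $(X,d)$. Then: (a) if $(\mathcal{K}(X),\overline f)$ is point-$\mathcal{A}$-transitive, then $(X,f)$ is point-$\mathcal{A}$-transitive; (b) if $(\mathcal{F}_E(X),\hat f)$ is point-$\mathcal{A}$-transitive, then $(X,f)$ is point-$\mathcal{A}$-transitive; (c) if $(X,f)$ is point-$\mathcal{A}$-transitive, then $(X^N,f_{(N)})$ is point-$\mathcal{A}$-recurrent for every $N\in\mathbb{N}$; (d) if $(X^N,f_{(N)})$ is point-$\mathcal{A}$-recurrent for every $N\in\mathbb{N}$, then $(\mathcal{K}(X),\overline f)$ is point-$\mathcal{A}$-recurrent; (e) if $(X^N,f_{(N)})$ is point-$\mathcal{A}$-recurrent for every $N\in\mathbb{N}$, then $(\mathcal{F}_\infty(X),\hat f)$ is point-$\mathcal{A}$-recurrent.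
   Context: $\mathbb{N}=\{1,2,\dots\}$, $\mathbb{N}_0=\mathbb{N}\cup\{0\}$, $\mathbb{I}=[0,1]$. A Furstenberg family is $\mathcal{A}\subset\mathscr{P}(\mathbb{N}_0)$ with $\varnothing\notin\mathcal{A}$ and upward hereditary. For a continuous map $g$ on a topological space $Y$, $x\in Y$, $U\subset Y$, $\mathcal{N}_g(x,U)=\{n\in\mathbb{N}_0:g^n(x)\in U\}$. $x$ is $\mathcal{A}$-transitive for $g$ if $\mathcal{N}_g(x,U)\in\mathcal{A}$ for every non-empty open $U\subset Y$, and $(Y,g)$ is point-$\mathcal{A}$-transitive if such a point exists. $x$ is $\mathcal{A}$-recurrent for $g$ if $\mathcal{N}_g(x,U)\in\mathcal{A}$ for every neighbourhood $U$ of $x$, and $(Y,g)$ is point-$\mathcal{A}$-recurrent if the set of such points is dense. $f_{(N)}=f\times\cdots\times f$ on $X^N$ with product topology. Fuzzy setting: for $u:X\to\mathbb{I}$, $u_\alpha=\{x:u(x)\ge\alpha\}$ ($\alpha\in]0,1]$), $u_0=\overline{\{x:u(x)>0\}}$. $\mathcal{F}(X)$: upper-semicontinuous $u:X\to\mathbb{I}$ with $u_0$ compact and $u_1\ne\varnothing$. $\mathcal{K}(X)$: non-empty compact subsets of $X$ with Hausdorff metric $d_H(A,B)=\max\{\sup_{a\in A}d(a,B),\sup_{b\in B}d(b,A)\}$; $\overline f(K)=f(K)$. Zadeh extension: $\hat f(u)(x)=\sup\{u(y):f(y)=x\}$ (and $0$ if $f^{-1}(\{x\})=\varnothing$). $d_\infty(u,v)=\sup_{\alpha\in\mathbb{I}}d_H(u_\alpha,v_\alpha)$;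 with $\overline d((x,\alpha),(y,\beta))=\max\{d(x,y),|\alpha-\beta|\}$ on $X\times\mathbb{I}$ and $\operatorname{end}(u)=\{(x,\alpha):u(x)\ge\alpha\}$, $d_E(u,v)$ is the $\overline d$-Hausdorff distance between $\operatorname{end}(u)$ and $\operatorname{end}(v)$. $\mathcal{F}_\infty(X)=(\mathcal{F}(X),d_\infty)$, $\mathcal{F}_E(X)=(\mathcal{F}(X),d_E)$. *)

(* Defs.v *)
From mathcomp Require Import all_boot all_order all_algebra.
From mathcomp Require Import boolp classical_sets cardinality reals.
Set Implicit Arguments. Unset Strict Implicit. Unset Printing Implicit Defensive.
Import Order.TTheory GRing.Theory Num.Theory.
Local Open Scope classical_set_scope.
Local Open Scope ring_scope.

Section Defs.
Variable R : realType.

Definition is_metric (X : Type) (d : X -> X -> R) : Prop :=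
  [/\ (forall x y, 0 <= d x y),
      (forall x y, d x y = 0 <-> x = y),
      (forall x y, d x y = d y x) &
      (forall x y z, d x z <= d x y + d y z)].

Definition mopen_in (Y : Type) (D : Y -> Y -> R) (S : set Y) (U : set Y) : Prop :=
  U `<=` S /\
  forall x, U x -> exists2 e : R, 0 < e & forall y, S y -> D x y < e -> U y.

Definition mopen (Y : Type) (D : Y -> Y -> R) (U : set Y) : Prop :=
  mopen_in D setT U.

Definition mclosure (X : Type) (d : X -> X -> R) (B : set X) : set X :=
  [set x | forall e : R, 0 < e -> exists2 y, B y & d x y < e].

Definition mcompact (X : Type) (d : X -> X -> R) (K : set X) : Prop :=
  forall C : set (set X), (forall U, C U -> mopen d U) ->
    K `<=` \bigcup_(U in C) U ->
    exists2 C', C' `<=` C /\ finite_set C' & K `<=` \bigcup_(U in C') U.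

Definition mcontinuous (X : Type) (d : X -> X -> R) (f : X -> X) : Prop :=
  forall x (e : R), 0 < e -> exists2 del : R, 0 < del &
    forall y, d x y < del -> d (f x) (f y) < e.

Definition furstenberg (A : set (set nat)) : Prop :=
  ~ A set0 /\ (forall F G : set nat, A F -> F `<=` G -> A G).

Definition Nset (Y : Type) (g : Y -> Y) (x : Y) (U : set Y) : set nat :=
  [set n | U (iter n g x)].

Definition A_transitive_pt (A : set (set nat)) (Y : Type) (S : set Y)
  (op : set Y -> Prop) (g : Y -> Y) (x : Y) : Prop :=
  S x /\ forall U, op U -> U !=set0 -> A (Nset g x U).

Definition point_A_transitive (A : set (set nat)) (Y : Type) (S : set Y)
  (op : set Y -> Prop) (g : Y -> Y) : Prop :=
  exists x, A_transitive_pt A S op g x.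

Definition nbhd (Y : Type) (op : set Y -> Prop) (x : Y) (U : set Y) : Prop :=
  exists V, [/\ op V, V x & V `<=` U].

Definition A_recurrent_pt (A : set (set nat)) (Y : Type) (S : set Y)
  (op : set Y -> Prop) (g : Y -> Y) (x : Y) : Prop :=
  S x /\ forall U, nbhd op x U -> A (Nset g x U).

Definition point_A_recurrent (A : set (set nat)) (Y : Type) (S : set Y)
  (op : set Y -> Prop) (g : Y -> Y) : Prop :=
  forall V, op V -> V !=set0 -> exists2 x, V x & A_recurrent_pt A S op g x.

Definition prod_open (X : Type) (d : X -> X -> R) (N : nat) (U : set ('I_N -> X)) : Prop :=
  forall x, U x -> exists V : 'I_N -> set X,
    (forall i, mopen d (V i) /\ V i (x i)) /\
    (forall y : 'I_N -> X, (forall i, V i (y i)) -> U y).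

Definition fN (X : Type) (N : nat) (f : X -> X) : ('I_N -> X) -> ('I_N -> X) :=
  fun x i => f (x i).

Definition pt_set_dist (Y : Type) (D : Y -> Y -> R) (a : Y) (B : set Y) : R :=
  inf [set D a b | b in B].

Definition hausdorff (Y : Type) (D : Y -> Y -> R) (A B : set Y) : R :=
  Num.max (sup [set pt_set_dist D a B | a in A])
          (sup [set pt_set_dist D b A | b in B]).

Definition Kspace (X : Type) (d : X -> X -> R) : set (set X) :=
  [set K | mcompact d K /\ K !=set0].

Definition Kmap (X : Type) (f : X -> X) : set X -> set X := fun K => f @` K.

Definition alpha_cut (X : Type) (d : X -> X -> R) (u : X -> R) (a : R) : set X :=
  if a == 0 then mclosure d [set x | 0 < u x] else [set x | a <= u x].

Definition usc (X : Type) (d : X -> X -> R) (u : X -> R) : Prop :=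
  forall x (t : R), u x < t -> exists2 e : R, 0 < e &
    forall y, d x y < e -> u y < t.

Definition Fspace (X : Type) (d : X -> X -> R) : set (X -> R) :=
  [set u | [/\ (forall x, 0 <= u x <= 1), usc d u,
              mcompact d (alpha_cut d u 0) & alpha_cut d u 1 !=set0]].

Definition zadeh (X : Type) (f : X -> X) (u : X -> R) : X -> R :=
  fun x => if pselect (exists y, f y = x) then sup [set u y | y in [set y | f y = x]]
           else 0.

Definition d_infty (X : Type) (d : X -> X -> R) (u v : X -> R) : R :=
  sup [set hausdorff d (alpha_cut d u a) (alpha_cut d v a) | a in [set a : R | 0 <= a <= 1]].

Definition dbar (X : Type) (d : X -> X -> R) (p q : X * R) : R :=
  Num.max (d p.1 q.1) `|p.2 - q.2|.

Definition endograph (X : Type) (u : X -> R) : set (X * R) :=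
  [set p | 0 <= p.2 <= 1 /\ p.2 <= u p.1].

Definition d_E (X : Type) (d : X -> X -> R) (u v : X -> R) : R :=
  hausdorff (dbar d) (endograph u) (endograph v).

End Defs.

(* Main.v *)
Require Import Defs.
From mathcomp Require Import all_boot all_order all_algebra.
From mathcomp Require Import boolp classical_sets cardinality reals.
From mathcomp Require Import lra.
Set Implicit Arguments. Unset Strict Implicit. Unset Printing Implicit Defensive.
Import Order.TTheory GRing.Theory Num.Theory.
Local Open Scope classical_set_scope.
Local Open Scope ring_scope.


Section Fin.
Variable R : realType.

Lemma seq_ub (T : eqType) (s : seq T) (phi : T -> R) :
  exists M, forall i, i \in s -> phi i <= M.
Proof.
elim: s => [|a s [M HM]]; first by exists 0.
exists (Num.max (phi a) M) => i; rewrite inE => /orP [/eqP ->|/HM h].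
  by rewrite le_max lexx.
by rewrite le_max h orbT.
Qed.

Lemma fin_ub (T : finType) (phi : T -> R) : exists M, forall i, phi i <= M.
Proof.
have [M HM] := seq_ub (enum T) phi; exists M => i; apply: HM; by rewrite mem_enum.
Qed.

Lemma seq_lb_pos (T : eqType) (s : seq T) (phi : T -> R) :
  (forall i, 0 < phi i) -> exists2 m, 0 < m & forall i, i \in s -> m <= phi i.
Proof.
move=> pos; elim: s => [|a s [m m0 Hm]]; first by exists 1.
exists (Num.min (phi a) m); first by rewrite lt_min pos m0.
move=> i; rewrite inE => /orP [/eqP ->|/Hm h].
  by rewrite ge_min lexx.
by rewrite ge_min h orbT.
Qed.

Lemma fin_lb_pos (T : finType) (phi : T -> R) :
  (forall i, 0 < phi i) -> exists2 m, 0 < m & forall i, m <= phi i.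
Proof.
move=> pos; have [m m0 Hm] := seq_lb_pos (enum T) pos; exists m => // i.
by apply: Hm; rewrite mem_enum.
Qed.

Lemma fin_max_lt (T : finType) (P : T -> Prop) (phi : T -> R) (a : R) :
  0 < a -> (forall i, P i -> phi i < a) ->
  exists M, [/\ 0 <= M, M < a & forall i, P i -> phi i <= M].
Proof.
move=> a0 H.
have : forall s : seq T, exists M, [/\ 0 <= M, M < a & forall i, i \in s -> P i -> phi i <= M].
  elim => [|b s [M [M0 Ma HM]]]; first by exists 0; split.
  case: (pselect (P b)) => Pb.
    exists (Num.max (phi b) M); split.
    - by rewrite le_max M0 orbT.
    - by rewrite gt_max Ma H.
    move=> i; rewrite inE => /orP [/eqP ->|/HM h] Pi.
      by rewrite le_max lexx.
    by rewrite le_max (h Pi) orbT.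
  exists M; split => // i; rewrite inE => /orP [/eqP -> Pi|/HM h Pi].
    by exfalso; apply: Pb.
  exact: h.
move=> /(_ (enum T)) [M [M0 Ma HM]]; exists M; split => // i; apply: HM.
by rewrite mem_enum.
Qed.

Lemma sup_le_c (S : set R) c : S !=set0 -> (forall x, S x -> x <= c) -> sup S <= c.
Proof. by move=> S0 H; apply: ge_sup. Qed.

Lemma le_sup_c (S : set R) c x : (forall y, S y -> y <= c) -> S x -> x <= sup S.
Proof. by move=> H Sx; apply: ub_le_sup => //; exists c. Qed.

Lemma sup_ge0_c (S : set R) c : (forall y, S y -> 0 <= y) -> (forall y, S y -> y <= c) ->
  0 <= sup S.
Proof.
move=> H0 Hc; have [[x Sx]|S0] := pselect (S !=set0).
  by apply: le_trans (H0 _ Sx) (le_sup_c Hc Sx).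
have -> : S = set0 by apply/seteqP; split => // x Sx; apply: S0; exists x.
by rewrite sup0.
Qed.

Lemma sup_empty (S : set R) : ~ (S !=set0) -> sup S = 0.
Proof.
move=> S0; have -> : S = set0 by apply/seteqP; split => // x Sx; apply: S0; exists x.
by rewrite sup0.
Qed.

End Fin.


Section Metric.
Variables (R : realType) (X : Type) (d : X -> X -> R).
Hypothesis hd : is_metric d.

Lemma d_ge0 x y : 0 <= d x y. Proof. by case: hd. Qed.
Lemma d0 x : d x x = 0. Proof. by case: hd => _ H _ _; apply/H. Qed.
Lemma d_sym x y : d x y = d y x. Proof. by case: hd. Qed.
Lemma d_tri x y z : d x z <= d x y + d y z. Proof. by case: hd. Qed.

Definition ball (c : X) (e : R) := [set y | d c y < e].

Lemma mopen_ball c e : mopen d (ball c e).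
Proof.
split => // y /= Hy; exists (e - d c y); first by rewrite subr_gt0.
move=> z _ Hz; rewrite /ball /=.
have := d_tri c y z; lra.
Qed.

Lemma mopen_far c e : mopen d [set y | e < d c y].
Proof.
split => // y /= Hy; exists (d c y - e); first by rewrite subr_gt0.
move=> z _ Hz /=.
have := d_tri c z y; rewrite (d_sym z y); lra.
Qed.

Lemma cpt_seq (K : set X) (P : set X -> Prop) : mcompact d K ->
  (forall z, K z -> exists U, [/\ mopen d U, U z & P U]) ->
  exists s : seq (set X), (forall U, U \in s -> P U) /\
     (forall z, K z -> exists2 U, U \in s & U z).
Proof.
move=> cK H.
have [C' [C'C fC'] cov] := cK [set U | mopen d U /\ P U] (fun U h => proj1 h)
  (fun z Kz => let: ex_intro U (And3 h1 h2 h3) := H z Kz in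
      ex_intro2 _ _ U (conj h1 h3) h2).
have [s Es] := (finite_seqP C').1 fC'.
exists s; split.
  by move=> U Us; have /C'C [] : C' U by rewrite Es.
move=> z /cov [U C'U Uz]; exists U => //.
by move: C'U; rewrite Es.
Qed.

End Metric.


Section Haus.
Variables (R : realType) (Y : Type) (D : Y -> Y -> R).
Hypothesis D0 : forall a b, 0 <= D a b.

Lemma dist_le a (B : set Y) b : B b -> pt_set_dist D a B <= D a b.
Proof.
move=> Bb; rewrite /pt_set_dist.
have : has_lbound [set D a b0 | b0 in B] by exists 0 => _ [b0 _ <-].
by move=> /ge_inf; apply; exists b.
Qed.

Lemma haus_le (P Q : set Y) c : P !=set0 -> Q !=set0 ->
  (forall a, P a -> exists2 b, Q b & D a b <= c) ->
  (forall b, Q b -> exists2 a, P a & D b a <= c) ->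
  hausdorff D P Q <= c.
Proof.
move=> [p Pp] [q Qq] H1 H2; rewrite /hausdorff ge_max; apply/andP; split.
  apply: ge_sup; first by exists (pt_set_dist D p Q), p.
  move=> _ [a Pa <-]; have [b Qb le] := H1 a Pa.
  exact: le_trans (dist_le a Qb) le.
apply: ge_sup; first by exists (pt_set_dist D q P), q.
move=> _ [b Qb <-]; have [a Pa le] := H2 b Qb.
exact: le_trans (dist_le b Pa) le.
Qed.

Lemma haus_lt (P Q : set Y) del b : hausdorff D P Q < del -> Q b ->
  has_ubound [set pt_set_dist D b' P | b' in Q] -> P !=set0 ->
  exists2 a, P a & D b a < del.
Proof.
move=> H Qb ub P0.
have h1 : pt_set_dist D b P < del.
  apply: le_lt_trans H; rewrite /hausdorff le_max; apply/orP; right.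
  by apply: ub_le_sup => //; exists b.
have P0' : [set D b a | a in P] !=set0.
  by case: P0 => a Pa; exists (D b a), a.
have [_ [a Pa <-] lt] := inf_lt P0' h1.
by exists a.
Qed.

End Haus.


Section Metric2.
Variables (R : realType) (X : Type) (d : X -> X -> R).
Hypothesis hd : is_metric d.

Lemma cpt_net (K : set X) e : mcompact d K -> 0 < e ->
  exists n (g : 'I_n -> X), (forall i, K (g i)) /\
    (forall z, K z -> exists i, d (g i) z < e).
Proof.
move=> cK e0.
have [s [Hs cov]] : exists s : seq (set X),
    (forall U, U \in s -> exists z, K z /\ U = ball d z e) /\
    (forall z, K z -> exists2 U, U \in s & U z).
  apply: (cpt_seq cK) => z Kz; exists (ball d z e); split.
  - exact: mopen_ball.
  - by rewrite /ball /= d0.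
  - by exists z.
have : forall i : 'I_(size s), exists z, K z /\ nth set0 s i = ball d z e.
  by move=> i; apply: Hs; apply: mem_nth.
move=> /choice [g Hg]; exists (size s), g; split; first by move=> i; case: (Hg i).
move=> z /cov [U Us Uz].
have hi : (index U s < size s)%N by rewrite index_mem.
exists (Ordinal hi); case: (Hg (Ordinal hi)) => _ E.
have E2 : nth set0 s (Ordinal hi) = U := nth_index set0 Us.
by rewrite E2 in E; rewrite E in Uz.
Qed.

Lemma cpt_bounded (K : set X) y : mcompact d K -> exists M, forall z, K z -> d y z <= M.
Proof.
move=> cK; have [n [g [_ Hg]]] := cpt_net cK ltr01.
have [M HM] := fin_ub (fun i => d y (g i)).
exists (M + 1) => z /Hg [i Hi].
have := d_tri hd y (g i) z; have := HM i; lra.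
Qed.

Lemma cpt_fin n (Q : 'I_n -> Prop) (g : 'I_n -> X) :
  mcompact d [set z | exists i, Q i /\ g i = z].
Proof.
move=> C Copen cov.
have : forall i, exists U, Q i -> C U /\ U (g i).
  move=> i; case: (pselect (Q i)) => Qi; last by exists set0.
  have [U CU Ug] := cov (g i) (ex_intro _ i (conj Qi erefl)).
  by exists U.
move=> /choice [h Hh].
exists [set h i | i in Q]; first split.
- by move=> _ [i Qi <-]; case: (Hh i Qi).
- by apply: finite_image; apply: finite_finset.
move=> z [i [Qi <-]]; exists (h i); first by exists i.
by case: (Hh i Qi).
Qed.

Lemma Kspace_fin n (Q : 'I_n -> Prop) (g : 'I_n -> X) : (exists i, Q i) ->
  Kspace d [set z | exists i, Q i /\ g i = z].
Proof. by move=> [i Qi]; split; [apply: cpt_fin | exists (g i), i]. Qed.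

Lemma haus_idx n (Q : 'I_n -> Prop) (g h : 'I_n -> X) c : (exists i, Q i) ->
  (forall i, Q i -> d (g i) (h i) <= c) ->
  hausdorff d [set z | exists i, Q i /\ g i = z] [set z | exists i, Q i /\ h i = z] <= c.
Proof.
move=> [i0 Qi0] H; apply: haus_le.
- exact: d_ge0 hd.
- by exists (g i0), i0.
- by exists (h i0), i0.
- by move=> _ [i [Qi <-]]; exists (h i); [exists i | exact: H].
- by move=> _ [i [Qi <-]]; exists (g i); [exists i | rewrite d_sym //; exact: H].
Qed.

End Metric2.


Section Dyn.
Variables (R : realType) (X : Type) (d : X -> X -> R).
Hypothesis hd : is_metric d.
Variables (A : set (set nat)) (f : X -> X).

Lemma iter_fN N n (v : 'I_N -> X) i : iter n (@fN X N f) v i = iter n f (v i).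
Proof. by elim: n => //= n IH; rewrite /fN IH. Qed.

Lemma iter_Kmap n (K : set X) x : K x -> (iter n (Kmap f) K) (iter n f x).
Proof. by move=> Kx; elim: n => //= n IH; exists (iter n f x). Qed.

Lemma iter_Kmap_fin n N (Q : 'I_N -> Prop) (g : 'I_N -> X) :
  iter n (Kmap f) [set z | exists i, Q i /\ g i = z] =
  [set z | exists i, Q i /\ iter n f (g i) = z].
Proof.
elim: n => //= n ->; apply/seteqP; split.
  by move=> _ [_ [i [Qi <-]] <-]; exists i.
by move=> _ [i [Qi <-]]; exists (iter n f (g i)) => //; exists i.
Qed.

Lemma mcont_iter n : mcontinuous d f -> mcontinuous d (iter n f).
Proof.
move=> fc; elim: n => [|n IH] x e e0 /=; first by exists e.
have [del1 del10 H1] := fc (iter n f x) e e0.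
have [del2 del20 H2] := IH x del1 del10.
by exists del2 => // y /H2 /H1.
Qed.

Lemma mopen_preim (g : X -> X) (V : set X) : mcontinuous d g -> mopen d V ->
  mopen d [set z | V (g z)].
Proof.
move=> gc [_ Vo]; split => // z /= Vgz.
have [e e0 He] := Vo _ Vgz.
have [del del0 Hdel] := gc z e e0.
by exists del => // y _ /Hdel; apply: He.
Qed.

Lemma mopen_bigI N (V : 'I_N -> set X) : (forall i, mopen d (V i)) ->
  mopen d [set z | forall i, V i z].
Proof.
move=> Vo; split => // z /= Vz.
have : forall i, exists e, 0 < e /\ forall y, d z y < e -> V i y.
  move=> i; have [_ Vio] := Vo i; have [e e0 He] := Vio z (Vz i).
  by exists e; split => // y; apply: He.
move=> /choice [e He].
have [m m0 Hm] := fin_lb_pos (fun i => proj1 (He i)).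
exists m => // y _ dzy i; apply: (proj2 (He i)).
exact: lt_le_trans dzy (Hm i).
Qed.

Definition pball N (c : 'I_N -> X) (r : R) := [set y : 'I_N -> X | forall i, d (c i) (y i) < r].

Lemma prod_ball N (c : 'I_N -> X) r : @prod_open R X d N (pball c r).
Proof.
move=> y Hy; exists (fun i => ball d (y i) (r - d (c i) (y i))); split.
  move=> i; split; first exact: mopen_ball.
  by rewrite /ball /= d0 // subr_gt0.
move=> w Hw i; have := Hw i; rewrite /ball /=.
have := d_tri hd (c i) (y i) (w i); lra.
Qed.

Lemma cpt_single y : Kspace d [set y].
Proof.
have -> : [set y] = [set z | exists i : 'I_1, True /\ (fun _ => y) i = z].
  apply/seteqP; split; first by move=> z ->; exists ord0.
  by move=> z [_ [_ <-]].
by apply: Kspace_fin; exists ord0.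
Qed.

Lemma part_c : furstenberg A -> mcontinuous d f ->
  point_A_transitive A setT (mopen d) f -> forall N : nat, (0 < N)%N ->
  point_A_recurrent A setT (@prod_open R X d N) (@fN X N f).
Proof.
move=> [A0 Aup] fc [x [_ Hx]] N _ V Vo [v Vv].
have [W [HW WV]] := Vo v Vv.
have : forall i, exists m, W i (iter m f x).
  move=> i; have := Hx (W i) (proj1 (HW i)) (ex_intro _ (v i) (proj2 (HW i))).
  case: (pselect (Nset f x (W i) !=set0)) => [[m Hm] _|N0 Ah]; first by exists m.
  exfalso; apply: A0; suff <- : Nset f x (W i) = set0 by [].
  by apply/seteqP; split => // m Hm; apply: N0; exists m.
move=> /choice [m Hm].
exists (fun i => iter (m i) f x); first by apply: WV.
split => // U [V' [V'o V'y V'U]].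
have [W' [HW' W'V']] := V'o _ V'y.
pose O := [set z | forall i, W' i (iter (m i) f z)].
have Oo : mopen d O.
  apply: (mopen_bigI (V := fun i => [set z | W' i (iter (m i) f z)])) => i.
  apply: mopen_preim; [exact: mcont_iter | exact: (proj1 (HW' i))].
have AO := Hx O Oo (ex_intro _ x (fun i => proj2 (HW' i))).
apply: Aup AO _ => n /= On; apply: V'U; apply: W'V' => i.
rewrite iter_fN -iterD addnC iterD; exact: On i.
Qed.

Lemma part_a : furstenberg A ->
  point_A_transitive A (Kspace d) (mopen_in (hausdorff d) (Kspace d)) (Kmap f) ->
  point_A_transitive A setT (mopen d) f.
Proof.
move=> [A0 Aup] [K0 [[cK0 [x Kx]] HK]].
exists x; split => // V [_ Vo] [y Vy].
have [e e0 He] := Vo y Vy.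
pose O := [set K | Kspace d K /\ exists2 r, r < e & forall z, K z -> d y z < r].
have Oo : mopen_in (hausdorff d) (Kspace d) O.
  split; first by move=> K [].
  move=> K [[cK [k0 Kk0]] [r re Hr]]; exists ((e - r) / 2); first lra.
  move=> K' [cK' K'0] hKK'; split; first by split.
  exists (r + (e - r) / 2); first lra.
  move=> z K'z.
  have [M HM] := cpt_bounded hd y cK'.
  have ub : has_ubound [set pt_set_dist d b' K | b' in K'].
    exists (M + d y k0) => _ [b K'b <-].
    have := dist_le (d_ge0 hd) b Kk0; have := d_tri hd b y k0.
    have := HM b K'b; rewrite (d_sym hd y b); lra.
  have [a Ka lt] := haus_lt hKK' K'z ub (ex_intro _ k0 Kk0).
  have := Hr a Ka; have := d_tri hd y a z; rewrite (d_sym hd z a) in lt; lra.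
have O0 : O !=set0.
  exists [set y]; split; first exact: cpt_single.
  by exists (e / 2); [lra | move=> z ->; rewrite d0 //; lra].
have AO := HK O Oo O0.
apply: Aup AO _ => n [_ [r re Hr]].
apply: He => //; have := Hr _ (iter_Kmap n Kx); lra.
Qed.

Lemma part_d : furstenberg A ->
  (forall N : nat, (0 < N)%N ->
        point_A_recurrent A setT (@prod_open R X d N) (@fN X N f)) ->
  point_A_recurrent A (Kspace d) (mopen_in (hausdorff d) (Kspace d)) (Kmap f).
Proof.
move=> [A0 Aup] HN O [OK Oo] [K OKK].
have [cK [k0 Kk0]] := OK K OKK.
have [e e0 He] := Oo K OKK.
have e30 : 0 < e / 3 by lra.
have [n [g [Kg Hg]]] := cpt_net hd cK e30.
have [i0 _] := Hg k0 Kk0.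
have n0 : (0 < n)%N by exact: (leq_ltn_trans (leq0n _) (ltn_ord i0)).
have gV : pball g (e / 3) g by move=> i; rewrite d0.
have [v Vv [_ Hrec]] := HN n n0 (pball g (e / 3)) (@prod_ball n g (e / 3)) (ex_intro _ g gV).
pose F := [set z | exists i : 'I_n, True /\ v i = z].
have KF : Kspace d F by apply: Kspace_fin; exists i0.
exists F.
  apply: He KF _; apply: (@le_lt_trans _ _ (2 * e / 3)); last lra.
  apply: haus_le; first exact: d_ge0 hd.
  - by exists k0.
  - by exists (v i0), i0.
  - move=> a Ka; have [i Hi] := Hg a Ka; exists (v i); first by exists i.
    have := d_tri hd a (g i) (v i); have := Vv i; rewrite (d_sym hd a (g i)); lra.
  - move=> _ [i [_ <-]]; exists (g i) => //; have := Vv i; rewrite (d_sym hd (v i)); lra.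
split => // U [W' [[W'K W'o] W'F W'U]].
have [eps eps0 Heps] := W'o F W'F.
have vP : pball v (eps / 2) v by move=> i; rewrite d0 //; lra.
have AP := Hrec (pball v (eps / 2)) (ex_intro _ (pball v (eps / 2)) (And3 (@prod_ball n v (eps / 2)) vP (@subset_refl _ _))).
apply: Aup AP _ => m /= Pm; apply: W'U.
rewrite /F iter_Kmap_fin.
apply: Heps; first by apply: Kspace_fin; exists i0.
apply: (@le_lt_trans _ _ (eps / 2)); last lra.
apply: (haus_idx hd); first by exists i0.
by move=> i _; have := Pm i; rewrite (@iter_fN n m v i); lra.
Qed.

End Dyn.


Definition ffz (R : realType) (X : Type) n (g : 'I_n -> X) (lam : 'I_n -> R) : X -> R :=
  fun z => sup [set lam i | i in [set i | g i = z]].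

Lemma seq_label (R : realType) (T : eqType) (s : seq T) (Q : T -> R -> Prop) (a : R) :
  0 < a -> (forall U t t', t <= t' -> Q U t -> Q U t') ->
  (forall U, U \in s -> exists2 t, t < a & Q U t) ->
  exists M, [/\ 0 <= M, M < a & forall U, U \in s -> Q U M].
Proof.
move=> a0 mono; elim: s => [|U s IH] Hs; first by exists 0; split.
have [M [M0 Ma HM]] : exists M, [/\ 0 <= M, M < a & forall U, U \in s -> Q U M].
  by apply: IH => V Vs; apply: Hs; rewrite inE Vs orbT.
have [t ta Ht] : exists2 t, t < a & Q U t by apply: Hs; rewrite inE eqxx.
exists (Num.max M t); split.
- by rewrite le_max M0.
- by rewrite gt_max Ma ta.
move=> V; rewrite inE => /orP [/eqP -> | Vs].
  by apply: mono Ht; rewrite le_max lexx orbT.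
by apply: mono (HM V Vs); rewrite le_max lexx.
Qed.

Section Fuzzy.
Variables (R : realType) (X : Type) (d : X -> X -> R).
Hypothesis hd : is_metric d.
Variables (A : set (set nat)) (f : X -> X).

Lemma ff_bounds n (g : 'I_n -> X) (lam : 'I_n -> R) : (forall i, 0 <= lam i <= 1) ->
  forall z, 0 <= ffz g lam z <= 1.
Proof.
move=> H z; apply/andP; split.
  apply: (sup_ge0_c (c := 1)) => _ [i _ <-]; by case/andP: (H i).
case: (pselect ([set lam i | i in [set i | g i = z]] !=set0)) => S0.
  by apply: ge_sup => // _ [i _ <-]; case/andP: (H i).
by rewrite /ffz sup_empty.
Qed.

Lemma ff_ge n (g : 'I_n -> X) (lam : 'I_n -> R) i : (forall i, lam i <= 1) ->
  lam i <= ffz g lam (g i).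
Proof. by move=> H; apply: (le_sup_c (c := 1)); [move=> _ [j _ <-] | exists i]. Qed.

Lemma ff_cut_pos n (g : 'I_n -> X) (lam : 'I_n -> R) a z : (forall i, lam i <= 1) ->
  0 < a -> a <= ffz g lam z -> exists i, a <= lam i /\ g i = z.
Proof.
move=> H a0 az; case: (pselect (exists i, a <= lam i /\ g i = z)) => // Hn; exfalso.
have H' : forall i, g i = z -> lam i < a.
  by move=> i gi; rewrite ltNge; apply/negP => ai; apply: Hn; exists i.
have [M [_ Ma HM]] := fin_max_lt a0 H'.
case: (pselect ([set lam i | i in [set i | g i = z]] !=set0)) => S0.
  have : ffz g lam z <= M by apply: ge_sup => // _ [i gi <-]; apply: HM.
  lra.
by move: az; rewrite /ffz sup_empty //; lra.
Qed.

Lemma ff_cut n (g : 'I_n -> X) (lam : 'I_n -> R) a : (forall i, 0 < lam i <= 1) ->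
  0 <= a -> alpha_cut d (ffz g lam) a = [set z | exists i, a <= lam i /\ g i = z].
Proof.
move=> H a0.
have H1 : forall i, lam i <= 1 by move=> i; case/andP: (H i).
rewrite /alpha_cut; case: eqP => [->|/eqP an0].
  apply/seteqP; split; last first.
    move=> _ [i [_ <-]] e e0; exists (g i); last by rewrite d0.
    by apply: (lt_le_trans _ (@ff_ge n g lam i H1)); case/andP: (H i).
  move=> z zc; case: (pselect (exists i, g i = z)) => [[i gi]|Hn].
    by exists i; split => //; case/andP: (H i) => /ltW.
  have phi0 : forall i, 0 < (if pselect (g i = z) then 1 else d z (g i)).
    move=> i; case: pselect => [gi|gi]; first exact: ltr01.
    rewrite lt_neqAle d_ge0 // andbT; apply/eqP => E; apply: gi.
    by case: hd => _ Hd _ _; symmetry; apply/Hd.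
  have [m m0 Hm] := fin_lb_pos phi0.
  have [y y0 dy] := zc m m0.
  have [i [_ gi]] := ff_cut_pos H1 y0 (lexx _).
  move: (Hm i); destruct (pselect (g i = z)) as [gz|ngz]; first by exfalso; apply: Hn; exists i.
  by move=> /= hm; rewrite gi in hm; lra.
have a0' : 0 < a by rewrite lt_neqAle eq_sym an0 a0.
apply/seteqP; split; first by move=> z /ff_cut_pos; apply.
by move=> _ [i [ai <-]]; apply: le_trans ai (@ff_ge n g lam i H1).
Qed.

Lemma ff_Fspace n (g : 'I_n -> X) (lam : 'I_n -> R) : (forall i, 0 < lam i <= 1) ->
  (exists i, lam i = 1) -> Fspace d (ffz g lam).
Proof.
move=> H [i1 Hi1].
have H01 : forall i, 0 <= lam i <= 1 by move=> i; case/andP: (H i) => /ltW -> ->.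
have H1 : forall i, lam i <= 1 by move=> i; case/andP: (H i).
split.
- exact: ff_bounds.
- move=> x t xt.
  have phi0 : forall i, 0 < (if pselect (g i = x) then 1 else d x (g i)).
    move=> i; case: pselect => [gi|gi]; first exact: ltr01.
    rewrite lt_neqAle d_ge0 // andbT; apply/eqP => E; apply: gi.
    by case: hd => _ Hd _ _; symmetry; apply/Hd.
  have [m m0 Hm] := fin_lb_pos phi0.
  exists m => // y dy.
  case: (pselect (y = x)) => [->//|yx].
  have : ~ ([set lam i | i in [set i | g i = y]] !=set0).
    move=> [_ [i gi _]]; move: (Hm i); destruct (pselect (g i = x)) as [gx|ngx].
      by move=> _; apply: yx; rewrite -gi gx.
    by move=> /= hm; rewrite gi in hm; lra.
  move=> /sup_empty; rewrite /ffz => ->.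
  by apply: le_lt_trans xt; case/andP: (@ff_bounds n g lam H01 x).
- by rewrite ff_cut //; apply: cpt_fin.
- by rewrite ff_cut //; exists (g i1), i1; rewrite Hi1.
Qed.

Lemma zadeh_ff n (g : 'I_n -> X) (lam : 'I_n -> R) : (forall i, 0 <= lam i <= 1) ->
  zadeh f (ffz g lam) = ffz (fun i => f (g i)) lam.
Proof.
move=> H; have B := @ff_bounds n g lam H.
have H1 : forall i, lam i <= 1 by move=> i; case/andP: (H i).
apply: funext => z; rewrite /zadeh; case: pselect => [[y0 fy0]|no] /=; last first.
  rewrite /ffz sup_empty // => -[_ [i fi _]]; apply: no; by exists (g i).
have ubL : forall x, [set ffz g lam y | y in [set y | f y = z]] x -> x <= 1.
  by move=> _ [y _ <-]; case/andP: (B y).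
have ubR : forall x, [set lam i | i in [set i | f (g i) = z]] x -> x <= 1.
  by move=> _ [i _ <-].
apply/eqP; rewrite eq_le; apply/andP; split.
  apply: ge_sup; first by exists (ffz g lam y0), y0.
  move=> _ [y fy <-].
  case: (pselect ([set lam i | i in [set i | g i = y]] !=set0)) => S0.
    apply: ge_sup => // _ [i gi <-]; apply: (le_sup_c ubR).
    by exists i => //=; rewrite gi.
  rewrite /ffz sup_empty //; apply: (sup_ge0_c (c := 1)) => // _ [i _ <-].
  by case/andP: (H i).
case: (pselect ([set lam i | i in [set i | f (g i) = z]] !=set0)) => S0.
  apply: ge_sup => // _ [i fgi <-]; apply: le_trans (@ff_ge n g lam i H1) _.
  by apply: (le_sup_c ubL); exists (g i).
rewrite /ffz sup_empty //; apply: (sup_ge0_c (c := 1)) => // _ [y _ <-].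
by case/andP: (B y).
Qed.

Lemma iter_zadeh_ff m n (g : 'I_n -> X) (lam : 'I_n -> R) : (forall i, 0 <= lam i <= 1) ->
  iter m (zadeh f) (ffz g lam) = ffz (fun i => iter m f (g i)) lam.
Proof. by move=> H; elim: m => //= m ->; rewrite zadeh_ff. Qed.

Lemma dinf_le (u v : X -> R) c :
  (forall a, 0 <= a <= 1 -> hausdorff d (alpha_cut d u a) (alpha_cut d v a) <= c) ->
  d_infty d u v <= c.
Proof.
move=> H; apply: ge_sup; first by exists (hausdorff d (alpha_cut d u 0) (alpha_cut d v 0)), 0 => //; apply/andP; split; [exact: lexx | exact: ler01].
by move=> _ [a a01 <-]; apply: H.
Qed.

End Fuzzy.


Section Parts.
Variables (R : realType) (X : Type) (d : X -> X -> R).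
Hypothesis hd : is_metric d.
Variables (A : set (set nat)) (f : X -> X).

Lemma part_b : furstenberg A ->
  point_A_transitive A (Fspace d) (mopen_in (d_E d) (Fspace d)) (zadeh f) ->
  point_A_transitive A setT (mopen d) f.
Proof.
move=> [A0 Aup] [u0 [[u01 _ _ [x ux]] Hu]].
have ux1 : 1 <= u0 x by move: ux; rewrite /alpha_cut oner_eq0.
have Hit : forall n, (forall z, iter n (zadeh f) u0 z <= 1) /\
    1 <= iter n (zadeh f) u0 (iter n f x).
  elim => [|n [IH1 IH2]] /=; first by split => // z; case/andP: (u01 z).
  split.
  - move=> z; rewrite /zadeh; case: pselect => [[y fy]|_] /=; last exact: ler01.
    apply: ge_sup; first by exists (iter n (zadeh f) u0 y), y.
    by move=> _ [w _ <-]; apply: IH1.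
  - rewrite /zadeh; case: pselect => [_|[]] /=; last by exists (iter n f x).
    apply: le_trans IH2 _; apply: (le_sup_c (c := 1)); first by move=> _ [w _ <-]; apply: IH1.
    by exists (iter n f x).
exists x; split => // V [_ Vo] [y Vy].
have [e1 e10 He1] := Vo y Vy.
pose e := Num.min e1 1.
have e0 : 0 < e by rewrite lt_min e10 ltr01.
have ee1 : e <= e1 by rewrite ge_min lexx.
have e1' : e <= 1 by rewrite ge_min lexx orbT.
pose O := [set v | Fspace d v /\ exists r, [/\ 0 < r, r < e & forall z, r <= v z -> d y z < r]].
have Oo : mopen_in (d_E d) (Fspace d) O.
  split; first by move=> v [].
  move=> v [Fv [r [r0 re Hr]]]; exists ((e - r) / 2); first lra.
  move=> w Fw hvw; split => //.
  exists (r + (e - r) / 2); split; [lra|lra|].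
  move=> z rz.
  have [v01 _ _ _] := Fv.
  have dbar0 : forall p q, 0 <= dbar d p q.
    by move=> p q; rewrite /dbar le_max d_ge0.
  have ub : has_ubound [set pt_set_dist (dbar d) b' (endograph v) | b' in endograph w].
    exists 1 => _ [b [/andP [b0 b1] _] <-].
    have Eb : endograph v (b.1, 0) by split; [rewrite lexx ler01 | case/andP: (v01 b.1)].
    apply: le_trans (dist_le dbar0 b Eb) _.
    rewrite /dbar /= (d0 hd) subr0 ge_max ler01 /=.
    by rewrite ger0_norm.
  have Ez : endograph w (z, r + (e - r) / 2).
    by split; [apply/andP; split => /=; lra | exact: rz].
  have En : endograph v !=set0.
    by exists (z, 0); split; [rewrite lexx ler01 | case/andP: (v01 z)].
  have [[z' a'] [/andP [a'0 a'1] a'v] lt] := haus_lt hvw Ez ub En.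
  move: lt; rewrite /dbar /= gt_max => /andP [lt1 lt2].
  move: lt2; rewrite ltr_norml => /andP [lt2 lt3].
  move: a'v => /= a'v.
  have rv : r <= v z' by apply: (le_trans _ a'v); lra.
  have := Hr z' rv; have := d_tri hd y z' z; rewrite (d_sym hd z' z); lra.
have O0 : O !=set0.
  exists (ffz (fun _ : 'I_1 => y) (fun _ => 1)); split.
    apply: ff_Fspace => //; last by exists ord0.
    by move=> _; rewrite ltr01 lexx.
  exists (e / 2); split; [lra|lra|].
  move=> z ez.
  have [i [_ <-]] := ff_cut_pos (fun _ => lexx 1) (ltac:(lra) : 0 < e / 2) ez.
  rewrite (d0 hd); lra.
have AO := Hu O Oo O0.
apply: Aup AO _ => n [_ [r [r0 re Hr]]].
apply: He1 => //; have [_ h] := Hit n.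
have := Hr _ (le_trans (ltW (lt_le_trans re e1')) h); lra.
Qed.


Lemma part_e : furstenberg A ->
  (forall N : nat, (0 < N)%N ->
        point_A_recurrent A setT (@prod_open R X d N) (@fN X N f)) ->
  point_A_recurrent A (Fspace d) (mopen_in (d_infty d) (Fspace d)) (zadeh f).
Proof.
move=> [A0 Aup] HN O [OF Oo] [u Ou].
have [u01 uusc cu0 [x1 ux1]] := OF u Ou.
have [e e0 He] := Oo u Ou.
pose eps := e / 3.
have eps0 : 0 < eps by rewrite /eps; lra.
pose u0 := alpha_cut d u 0.
have u0E : u0 = mclosure d [set z | 0 < u z] by rewrite /u0 /alpha_cut eqxx.
have x1' : 1 <= u x1 by move: ux1; rewrite /alpha_cut oner_eq0.
have supp0 : forall z, 0 < u z -> u0 z.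
  by move=> z uz; rewrite u0E => r r0; exists z => //; rewrite (d0 hd).
have cutu : forall a z, 0 <= a -> alpha_cut d u a z -> u0 z /\ (0 < a -> a <= u z).
  move=> a z a0; rewrite /alpha_cut; case: (eqVneq a 0) => [->|an0].
    by move=> h; split; [rewrite u0E | rewrite ltxx].
  move=> /= h.
  have ap : 0 < a by rewrite lt_neqAle eq_sym an0 a0.
  by split => //; apply: supp0; apply: lt_le_trans ap h.
have cut0 : forall z, u0 z -> alpha_cut d u 0 z by [].
have cutp : forall a z, 0 < a -> a <= u z -> alpha_cut d u a z.
  by move=> a z ap h; rewrite /alpha_cut gt_eqF.
have [n [g [u0g Hg]]] := cpt_net hd cu0 eps0.
pose lam i := sup [set u z | z in [set z | d (g i) z < eps]].
have ubS : forall i x, [set u z | z in [set z | d (g i) z < eps]] x -> x <= 1.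
  by move=> i _ [z _ <-]; case/andP: (u01 z).
have lam_ge : forall i z, d (g i) z < eps -> u z <= lam i.
  by move=> i z dz; apply: (le_sup_c (ubS i)); exists z.
have lam_le1 : forall i, lam i <= 1.
  move=> i; apply: ge_sup; last exact: ubS.
  by exists (u (g i)), (g i) => //=; rewrite (d0 hd).
have lam_pos : forall i, 0 < lam i.
  move=> i; have : u0 (g i) := u0g i; rewrite u0E => /(_ eps eps0) [z z0 dz].
  exact: lt_le_trans z0 (lam_ge i z dz).
have lam01 : forall i, 0 < lam i <= 1 by move=> i; rewrite lam_pos lam_le1.
have lam01' : forall i, 0 <= lam i <= 1 by move=> i; rewrite (ltW (lam_pos i)) lam_le1.
have [i1 Hi1] : exists i1, lam i1 = 1.
  have [i1 di1] := Hg x1 (supp0 x1 (lt_le_trans ltr01 x1')).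
  exists i1; apply/eqP; rewrite eq_le lam_le1 /=.
  exact: le_trans x1' (lam_ge i1 x1 di1).
have attain : forall i a, 0 < a -> a <= lam i ->
    exists z, a <= u z /\ d (g i) z <= eps.
  move=> i a a0 al.
  case: (pselect (exists z, a <= u z /\ d (g i) z <= eps)) => // Hn; exfalso.
  have H' : forall z, a <= u z -> eps < d (g i) z.
    by move=> z az; rewrite ltNge; apply/negP => dz; apply: Hn; exists z.
  have [s [Hs cov]] : exists s : seq (set X),
      (forall U, U \in s -> exists2 t, t < a &
          (forall y, U y -> u y < t \/ eps < d (g i) y)) /\
      (forall z, u0 z -> exists2 U, U \in s & U z).
    apply: (cpt_seq cu0) => z _.
    case: (ltP (u z) a) => [uza|auz].
    - have [r r0 Hr] := uusc z ((u z + a) / 2) (ltac:(lra)).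
      exists (ball d z r); split; [exact: mopen_ball | by rewrite /ball /= (d0 hd) | ].
      by exists ((u z + a) / 2); [lra | move=> w /Hr; left].
    - exists [set w | eps < d (g i) w]; split; [exact: mopen_far | exact: H' | ].
      by exists 0 => // w h; right.
  have mono : forall (U : set X) t t', t <= t' ->
      (forall y, U y -> u y < t \/ eps < d (g i) y) ->
      (forall y, U y -> u y < t' \/ eps < d (g i) y).
    move=> U t t' tt' h y Uy; case: (h y Uy) => [h1|h2]; [left | by right].
    exact: lt_le_trans h1 tt'.
  have [T [T0 Ta HT]] := seq_label a0 mono Hs.
  have Sne : [set u z | z in [set z | d (g i) z < eps]] !=set0.
    by exists (u (g i)), (g i) => //=; rewrite (d0 hd).
  have [_ [z dz <-] Tz] := sup_gt Sne (lt_le_trans Ta al).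
  have [U Us Uz] := cov z (supp0 z (le_lt_trans T0 Tz)).
  case: (HT U Us z Uz) => h; move: dz => /= dz; lra.
have n0 : (0 < n)%N by exact: (leq_ltn_trans (leq0n _) (ltn_ord i1)).
have gV : pball d g eps g by move=> i; rewrite (d0 hd).
have [v Vv [_ Hrec]] := HN n n0 (pball d g eps) (@prod_ball R X d hd n g eps)
  (ex_intro _ g gV).
pose w := ffz v lam.
have Fw : Fspace d w by apply: ff_Fspace => //; exists i1.
exists w.
  apply: He Fw _; apply: (@le_lt_trans _ _ (2 * eps)); last by rewrite /eps; lra.
  apply: dinf_le => a /andP [a0 a1].
  rewrite (ff_cut hd v lam01 a0).
  apply: haus_le; first exact: d_ge0 hd.
  - exists x1; case: (eqVneq a 0) => [->|an0]; first by apply: supp0; lra.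
    apply: cutp => //; [by rewrite lt_neqAle eq_sym an0 a0 | lra].
  - by exists (v i1), i1; rewrite Hi1.
  - move=> z /(cutu a z a0) [u0z az].
    have [i Hi] := Hg z u0z.
    exists (v i).
      exists i; split => //; case: (eqVneq a 0) => [->|an0]; first exact: ltW.
      apply: le_trans (az _) (lam_ge i z Hi).
      by rewrite lt_neqAle eq_sym an0 a0.
    have := d_tri hd z (g i) (v i); have := Vv i; rewrite (d_sym hd z (g i)); lra.
  - move=> _ [i [ai <-]].
    case: (eqVneq a 0) => [a00|an0].
      exists (g i); first by rewrite a00; exact: u0g.
      by have := Vv i; rewrite (d_sym hd (v i)); lra.
    have ap : 0 < a by rewrite lt_neqAle eq_sym an0 a0.
    have [z [az dz]] := attain i a ap ai.
    exists z; first exact: cutp.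
    have := d_tri hd (v i) (g i) z; have := Vv i; rewrite (d_sym hd (v i) (g i)); lra.
split => // U [W' [[W'F W'o] W'w W'U]].
have [r r0 Hr] := W'o w W'w.
have vP : pball d v (r / 2) v by move=> i; rewrite (d0 hd); lra.
have AP := Hrec (pball d v (r / 2))
  (ex_intro _ (pball d v (r / 2)) (And3 (@prod_ball R X d hd n v (r / 2)) vP (@subset_refl _ _))).
apply: Aup AP _ => m /= Pm; apply: W'U.
rewrite /w (iter_zadeh_ff f m v lam01').
apply: Hr; first by apply: ff_Fspace => //; exists i1.
apply: (@le_lt_trans _ _ (r / 2)); last lra.
apply: dinf_le => a /andP [a0 a1].
rewrite (ff_cut hd v lam01 a0) (ff_cut hd _ lam01 a0).
apply: (haus_idx hd); first by exists i1; rewrite Hi1.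
by move=> i _; have := Pm i; rewrite (@iter_fN X f n m v i); lra.
Qed.

End Parts.

Unset Implicit Arguments.

Theorem lemma3p6 (R : realType) (X : Type) (d : X -> X -> R)
  (A : set (set nat)) (f : X -> X) :
  is_metric d -> furstenberg A -> mcontinuous d f ->
  [/\ (* (a) *)
      point_A_transitive A (Kspace d) (mopen_in (hausdorff d) (Kspace d)) (Kmap f) ->
      point_A_transitive A setT (mopen d) f,
      (* (b) *)
      point_A_transitive A (Fspace d) (mopen_in (d_E d) (Fspace d)) (zadeh f) ->
      point_A_transitive A setT (mopen d) f,
      (* (c) *)
      point_A_transitive A setT (mopen d) f ->
      forall N : nat, (0 < N)%N ->
        point_A_recurrent A setT (@prod_open R X d N) (@fN X N f),
      (* (d) *)
      (forall N : nat, (0 < N)%N ->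
        point_A_recurrent A setT (@prod_open R X d N) (@fN X N f)) ->
      point_A_recurrent A (Kspace d) (mopen_in (hausdorff d) (Kspace d)) (Kmap f) &
      (* (e) *)
      (forall N : nat, (0 < N)%N ->
        point_A_recurrent A setT (@prod_open R X d N) (@fN X N f)) ->
      point_A_recurrent A (Fspace d) (mopen_in (d_infty d) (Fspace d)) (zadeh f)].
Proof.
move=> hd hA fc; split.
- exact: (part_a hd hA).
- exact: (part_b hd hA).
- exact: (part_c hA fc).
- exact: (part_d hd hA).
- exact: (part_e hd hA).
Qed.
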